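(* Let $\Gamma_0$ be a directed Eulerian multi-triangulation of a connected closed $2$-dimensional surface $M$ whose underlying graph is $3$-colorable, and fix a proper $3$-coloring of the underlying graph. Then: (1) if there is a directed walk of length $m$ in $\Gamma_0$ from a vertex $v$ to a vertex $w$, then $v$ and $w$ have the same color if and only if $m$ is divisible by $3$; (2) every closed directed walk in $\Gamma_0$ has length divisible by $3$.
   Context: Digraphs are finite, without loops, possibly with multiple directed edges. An Eulerian digraph is a connected digraph in which every vertex has equal indegree and outdegree. A directed Eulerian embedding is a $2$-cell embedding of an Eulerian digraph in a surface such that the boundary of each face is a directed closed walk (equivalently, incoming and outgoing edges alternate in the rotation around each vertex). A multi-triangulation of $M$ is a closed $2$-cell embedding (every face homeomorphic to a closed disk) of a connected finite graph (without loops, multiple edges allowed) in $M$ all of whose faces are triangles. A directed Eulerian multi-triangulation is a directed Eulerian embedding whose underlying graph is a multi-triangulation. The length of a walk is the number of edges traversed, counted with multiplicity. *)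

(* Defs.v *)
(* Combinatorial (flag / "generalized combinatorial map")
   model of a 2-cell embedding of a graph in a connected closed surface. *)
From mathcomp Require Import all_boot.
Set Implicit Arguments. Unset Strict Implicit. Unset Printing Implicit Defensive.

Section Maps.
Variables (D : finType) (a0 a1 a2 : D -> D).

(* D = flags (vertex, edge, face-side) of the embedding;
   a0 changes the vertex, a1 the edge, a2 the face, keeping the other two.
   Vertices = <a1,a2>-orbits, edges = <a0,a2>-orbits, faces = <a0,a1>-orbits. *)
Record surface_map : Prop := {
  sm_inv0 : involutive a0; sm_inv1 : involutive a1; sm_inv2 : involutive a2;
  sm_fpf0 : forall d, a0 d != d;
  sm_fpf1 : forall d, a1 d != d;
  sm_fpf2 : forall d, a2 d != d;
  sm_comm02 : forall d, a0 (a2 d) = a2 (a0 d);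
  sm_fpf02 : forall d, a0 (a2 d) != d;
  sm_conn : forall d d',
    connect (fun x y => [|| y == a0 x, y == a1 x | y == a2 x]) d d' }.

Definition same_vertex (d d' : D) : bool :=
  connect (fun x y => (y == a1 x) || (y == a2 x)) d d'.

Definition loopless : Prop := forall d, ~~ same_vertex d (a0 d).

(* every face is a triangle: its boundary walk has length 3 *)
Definition triangular_faces : Prop := forall d, iter 3 (fun x => a1 (a0 x)) d = d.

Definition multi_triangulation : Prop :=
  [/\ surface_map, loopless & triangular_faces].

(* orientation of edges: [out d] = the edge of flag d is directed away from
   the vertex of d.  Well defined on edges, and incoming/outgoing edges
   alternate in the rotation around each vertex. *)
Definition directed_eulerian (out : D -> bool) : Prop :=
  [/\ forall d, out (a0 d) = ~~ out d,
      forall d, out (a2 d) = out d &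
      forall d, out (a1 d) = ~~ out d].

Definition proper_3coloring (col : D -> 'I_3) : Prop :=
  [/\ forall d, col (a1 d) = col d,
      forall d, col (a2 d) = col d &
      forall d, col (a0 d) != col d].

(* [is_dwalk out v s w]: the sequence of flags s (one flag per traversed
   edge, taken at its tail) is a directed walk from the vertex of v to the
   vertex of w; its length is [size s]. *)
Fixpoint is_dwalk (out : D -> bool) (v : D) (s : seq D) (w : D) : bool :=
  match s with
  | [::] => same_vertex v w
  | d :: s' => [&& same_vertex v d, out d & is_dwalk out (a0 d) s' w]
  end.

End Maps.

(* Main.v *)
Require Import Defs.
From mathcomp Require Import all_boot.
From mathcomp Require Import zify.

Lemma conn_const (T : finType) (e : rel T) (f : T -> nat) :
  (forall x y, e x y -> f y = f x) -> forall x y, connect e x y -> f y = f x.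
Proof.
move=> H x y /connectP [p]; elim: p x => [|z p IH] x /=; first by move=> _ ->.
move=> /andP [exz pz] ey; rewrite (IH z pz ey); exact: H.
Qed.

Theorem lemma1 (D : finType) (a0 a1 a2 : D -> D) (out : D -> bool)
  (col : D -> 'I_3) :
  multi_triangulation a0 a1 a2 ->
  directed_eulerian a0 a1 a2 out ->
  proper_3coloring a0 a1 a2 col ->
  (forall (v w : D) (s : seq D), is_dwalk a0 a1 a2 out v s w ->
      (col v == col w) = (3 %| size s)) /\
  (forall (v : D) (s : seq D), is_dwalk a0 a1 a2 out v s v -> 3 %| size s).
Proof.
move=> [[i0 i1 i2 _ _ _ c02 _ conn] _ tri] [o0 o2 o1] [k1 k2 k0].
pose c d := nat_of_ord (col d).
have cl d : c d < 3 by exact: ltn_ord.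
have cn d : c (a0 d) != c d by exact: k0.
have c1 d : c (a1 d) = c d by rewrite /c k1.
have c2 d : c (a2 d) = c d by rewrite /c k2.
pose del d := (c (a0 d) + 3 - c d) %% 3.
have del0 x : del (a0 x) = (3 - del x) %% 3.
  rewrite /del i0; have := cl x; have := cl (a0 x); have := cn x.
  move/eqP; lia.
have deltri d : del (a1 (a0 d)) = del d.
  have := tri d; rewrite /= => E.
  have h1 := cn d; have h2 := cn (a1 (a0 d)); have h3 := cn (a1 (a0 (a1 (a0 d)))).
  have e3 : c (a0 (a1 (a0 (a1 (a0 d))))) = c d by rewrite -c1 E.
  rewrite /del.
  move: h1 h2 h3; rewrite e3 !c1.
  have := cl d; have := cl (a0 d); have := cl (a0 (a1 (a0 d))).
  move=> ? ? ? /eqP ? /eqP ? /eqP ?; lia.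
pose sig d := if out d then del d else del (a0 d).
have s0 d : sig (a0 d) = sig d by rewrite /sig o0 i0; case: (out d).
have s2 d : sig (a2 d) = sig d.
  by rewrite /sig o2 /del !c02 !c2 ?i0 ?c2.
have s10 d : sig (a1 (a0 d)) = sig d.
  rewrite /sig o1 o0 negbK deltri; case: (out d) => //.
  by rewrite del0 deltri -del0.
have s1 d : sig (a1 d) = sig d.
  by rewrite -{1}(i0 d) s10 s0.
have sc x y : sig y = sig x.
  apply: (@conn_const _ _ sig _ _ _ (conn x y)) => u v /or3P [] /eqP ->; by [].
have sv x : sig x = 1 \/ sig x = 2.
  rewrite /sig /del; case: (out x); [have := cn x; have := cl x; have := cl (a0 x)
   | have := cn (a0 x); have := cl (a0 x); have := cl (a0 (a0 x))];
   move=> ? ? /eqP ?; lia.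
have sv_c x y : same_vertex a1 a2 x y -> c y = c x.
  apply: (@conn_const _ _ c) => u v /orP [] /eqP ->; by [].
have walk v s w : is_dwalk a0 a1 a2 out v s w -> c w = (c v + sig v * size s) %% 3.
  elim: s v => [|d s IH] v /=.
    move=> /sv_c ->; have := cl v; lia.
  move=> /and3P [svd od wk]; rewrite (IH _ wk) (sc d (a0 d)) (sc d v).
  have e1 := sv_c _ _ svd.
  have : sig d = del d by rewrite /sig od.
  rewrite /del e1 => E; have := cl v; have := cl (a0 d).
  move: E; case: (sv d) => ->; lia.
have main v w s : is_dwalk a0 a1 a2 out v s w -> (col v == col w) = (3 %| size s).
  move=> /walk Hw; rewrite -val_eqE /= -/(c v) -/(c w) Hw.
  have := cl v; case: (sv v) => -> h; apply/eqP/idP; lia.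
split=> // v s H; by rewrite -(main _ _ _ H).
Qed.
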